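(* Let $p$ be an odd prime, $P$ a finite $p$-group, $N$ a normal subgroup of $P$, and $j\ge 1$ an integer. If $\operatorname{pwh}_P(N)\le j$, then $[N,{}_jP]\le N^p$.
   Context: For a finite $p$-group $P$, a normal subgroup $N$ of $P$ is powerfully embedded in $P$ if $[N,P]\le N^p$ when $p$ is odd, and $[N,P]\le N^4$ when $p=2$ (here $N^{k}$ denotes the subgroup generated by all $k$-th powers of elements of $N$). An $\eta$-series of $P$ is an ascending series $1=N_0\le N_1\le N_2\le\cdots$ of normal subgroups of $P$ such that $N_{i+1}/N_i$ is powerfully embedded in $P/N_i$ for all $i$. For $N\trianglelefteq P$, the powerful height $\operatorname{pwh}_P(N)$ is the smallest $k$ such that there is an $\eta$-series with $N_k=N$. $[N,{}_jP]$ denotes $[N,P,\ldots,P]$ with $j$ copies of $P$, defined recursively by $[N,{}_1P]=[N,P]$ and $[N,{}_{j+1}P]=[[N,{}_jP],P]$. *)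

(* Defs.v *)
From HB Require Import structures.
From mathcomp Require Import all_boot all_fingroup all_solvable.
Set Implicit Arguments. Unset Strict Implicit. Unset Printing Implicit Defensive.
Local Open Scope group_scope.

Definition powg (gT : finGroupType) (k : nat) (N : {set gT}) : {set gT} :=
  <<[set x ^+ k | x in N]>>.

Definition pw_embedded (gT : finGroupType) (p : nat) (N P : {set gT}) : bool :=
  (N <| P) && ([~: N, P] \subset powg (if p == 2 then 4 else p) N).

Definition eta_series (gT : finGroupType) (p : nat) (P : {group gT})
    (Ns : nat -> {group gT}) (k : nat) : Prop :=
  Ns 0 = 1 :> {set gT} /\
  (forall i, i <= k -> Ns i <| P) /\
  (forall i, i < k -> Ns i \subset Ns i.+1) /\
  (forall i, i < k -> pw_embedded p (Ns i.+1 / Ns i) (P / Ns i)).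

(* pwh_P(N) <= j : there is an eta-series with N_k = N for some k <= j
   (equivalently, the least such k is at most j). *)
Definition pwh_le (gT : finGroupType) (p : nat) (P N : {group gT}) (j : nat) : Prop :=
  exists k, exists Ns : nat -> {group gT},
    k <= j /\ eta_series p P Ns k /\ Ns k = N.

Definition comm_iter (gT : finGroupType) (N P : {set gT}) (j : nat) : {set gT} :=
  iter j (fun H => [~: H, P]) N.

(* Main.v *)
Require Import Defs.
From mathcomp Require Import all_boot all_fingroup all_solvable.
From mathcomp Require Import zify.
Local Open Scope group_scope.

Theorem lemma2p2 (gT : finGroupType) (p : nat) (P N : {group gT}) (j : nat) :
  prime p -> odd p -> p.-group P -> N <| P -> 1 <= j ->
  pwh_le p P N j ->
  comm_iter N P j \subset powg p N.
Proof.
move=> pr_p odd_p _ nNP _ [k [Ns [hk [[N0 [Nn [Nasc Npw]]] NkN]]]].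
have p2 : (p == 2) = false.
  by apply/negbTE; apply/eqP => e; move: odd_p; rewrite e.
have -> : powg p N = <<[set x ^+ p | x in N]>> by [].
set M := <<[set x ^+ p | x in N]>>.
have sNP : N \subset P := normal_sub nNP.
have MN : M \subset N.
  rewrite gen_subG; apply/subsetP => _ /imsetP[x xN ->]; exact: groupX.
have MP : M \subset P := subset_trans MN sNP.
have nMP : P \subset 'N(M).
  apply: norms_gen; apply/subsetP => y Py; rewrite inE.
  apply/subsetP => _ /imsetP[z /imsetP[x xN ->] ->].
  rewrite conjXg; apply: imset_f; rewrite memJ_norm //.
  exact: (subsetP (normal_norm nNP)).
have NsN : forall i, i <= k -> Ns i \subset N.
  have H : forall d, d <= k -> Ns (k - d) \subset Ns k.
    elim=> [|d IH] hd; first by rewrite subn0.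
    apply: subset_trans (IH (ltnW hd)).
    rewrite -(subnSK hd); apply: Nasc; rewrite subnSK //; lia.
  move=> i hi; rewrite -NkN; have := H (k - i) (leq_subr _ _).
  by rewrite subKn.
have key : forall i, i < k -> [~: Ns i.+1, P] \subset Ns i * M.
  move=> i hi.
  have nHP : P \subset 'N(Ns i) := normal_norm (Nn i (ltnW hi)).
  have sAP : Ns i.+1 \subset P := normal_sub (Nn i.+1 hi).
  have sCA : [~: Ns i.+1, P] \subset Ns i.+1.
    by rewrite commg_subl normal_norm // Nn.
  apply: (@subset_trans _ _ (Ns i * <<[set x ^+ p | x in Ns i.+1]>>)).
    rewrite -quotientSK; last exact: subset_trans sCA (subset_trans sAP nHP).
    rewrite quotientR //; last exact: subset_trans sAP nHP.
    move: (Npw i hi) => /andP[_]; rewrite p2 => sub.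
    apply: subset_trans sub _.
    rewrite /powg gen_subG; apply/subsetP => _ /imsetP[y yAH ->].
    case/morphimP: yAH => x nx xA ->.
    rewrite -morphX //; apply: mem_quotient; apply: mem_gen; exact: imset_f.
  apply: mulgS; apply: genS; apply: imsetS; exact: NsN.
have nX : forall m, P \subset 'N(comm_iter N P m).
  elim=> [|m IH] /=; first exact: normal_norm.
  exact: normsR.
have Xdec : forall m, comm_iter N P m.+1 \subset comm_iter N P m.
  case=> [|m] /=; first by rewrite commg_subl normal_norm.
  have := nX m.+1; rewrite /= => h.
  by rewrite (commg_subl [group of [~: comm_iter N P m, P]] P).
have claim : forall m, m <= k -> comm_iter N P m \subset Ns (k - m) * M.
  elim=> [|m IH] hm.
    by rewrite subn0 NkN; apply: mulg_subl; exact: group1.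
  rewrite [comm_iter _ _ _]/=.
  apply: subset_trans (commSg P (IH (ltnW hm))) _.
  rewrite commMG; last first.
    apply: subset_trans MP _; apply: normsR; first exact: normal_norm (Nn _ (leq_subr _ _)).
    exact: normG.
  have -> : Ns (k - m.+1) * M = Ns (k - m.+1) * M * M by rewrite -mulgA mulGid.
  apply: mulgSS; last by rewrite commg_subl.
  have e := subnSK hm; rewrite -e; apply: key; lia.
have XkM : comm_iter N P k \subset M.
  by have := claim k (leqnn k); rewrite subnn N0 mul1g.
have Xmon : forall d, comm_iter N P (k + d) \subset comm_iter N P k.
  elim=> [|d IH]; first by rewrite addn0.
  by rewrite addnS; apply: subset_trans (Xdec _) IH.
by rewrite -(subnKC hk); apply: subset_trans (Xmon _) XkM.
Qed.
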